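(* Let $k\in\mathbb{N}$ and let $A\subseteq\mathbb{N}$ with $\min(A)=0$ and $\max(A)\le k$. If $B$ and $D$ are different divisors of $A$, then $F(B)\cap F(D)=\emptyset$.
   Context: $\mathbb{N}=\{0,1,2,\ldots\}$, $[m]=\{0,1,\ldots,m\}$ (with $[m]=\emptyset$ for $m<0$). $S+T=\{s+t:s\in S,t\in T\}$. A set $B\subseteq\mathbb{N}$ is a divisor of $A$ if $B+C=A$ for some $C\subseteq\mathbb{N}$. For $A$ as in the claim and sets $X,Y$ with $X+Y=A$, define $Y_X=Y\cup\{s\in[k]\setminus A: s<\max(X)\}\cup\{s-\max(X): s\in[k]\setminus A,\ s\ge\max(X)\}$ ($k$-promotion). For a divisor $B$ of $A$, $F(B)$ is the set of subsets of $\mathbb{N}$ obtained as follows: for each $C\subseteq\mathbb{N}$ with $B+C=A$, if $\max(B)\le\max(C)$ then $B\in F(B)$, and if $\max(B)\ge\max(C)$ then $B_C\in F(B)$, where $B_C=B\cup\{s\in[k]\setminus A:s<\max(C)\}\cup\{s-\max(C):s\in[k]\setminus A,\ s\ge\max(C)\}$ (so if $\max(C)=\max(B)$ both $B$ and $B_C$ lie in $F(B)$). *)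

(* Defs.v *)
From mathcomp Require Import all_boot.
From mathcomp Require Import boolp classical_sets.
Set Implicit Arguments. Unset Strict Implicit. Unset Printing Implicit Defensive.
Local Open Scope classical_set_scope.

Definition sumset (S T : set nat) : set nat :=
  [set n | exists s t, S s /\ T t /\ n = (s + t)%N].

Definition is_divisor (A B : set nat) : Prop := exists C : set nat, sumset B C = A.

Definition is_max (S : set nat) (m : nat) : Prop := S m /\ forall s, S s -> (s <= m)%N.

(* max(S): the maximum of S (chosen classically; only used for sets that
   have a maximum, namely nonempty finite ones). *)
Definition smax (S : set nat) : nat := xget 0%N (is_max S).

Definition gaps (k : nat) (A : set nat) : set nat := [set s | (s <= k)%N /\ ~ A s].

Definition promote (k : nat) (A X Y : set nat) : set nat :=
  Y `|` [set s | gaps k A s /\ (s < smax X)%N]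
    `|` [set n | exists s, gaps k A s /\ (smax X <= s)%N /\ n = (s - smax X)%N].

Definition Ffam (k : nat) (A B : set nat) : set (set nat) :=
  [set X | exists C : set nat, sumset B C = A /\
     (((smax B <= smax C)%N /\ X = B) \/
      ((smax C <= smax B)%N /\ X = promote k A C B))].

(* Main.v *)
Require Import Defs.
From mathcomp Require Import all_boot.
From mathcomp Require Import boolp classical_sets.
From mathcomp Require Import zify.
Local Open Scope classical_set_scope.
Set Implicit Arguments. Unset Strict Implicit.

Lemma is_max_uniq S m1 m2 : is_max S m1 -> is_max S m2 -> m1 = m2.
Proof. move=> [H1 H1'] [H2 H2']; have := H1' _ H2; have := H2' _ H1; lia. Qed.

Lemma smaxE S m : is_max S m -> smax S = m.
Proof. move=> H; rewrite /smax; have := @xgetI _ 0%N (is_max S) m H; move=> h; exact: is_max_uniq h H. Qed.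

Lemma exists_max (S : set nat) m : S 0%N -> (forall s, S s -> (s <= m)%N) ->
  exists x, is_max S x.
Proof.
move=> S0 Sm; apply: contrapT => H.
have: forall j, exists x, S x /\ (j <= x)%N.
  elim => [|j [x [Sx jx]]]; first by exists 0%N.
  case: (pselect (exists s, S s /\ (x < s)%N)) => [[s [Ss xs]]|n].
    by exists s; split => //; lia.
  exfalso; apply: H; exists x; split => // s Ss.
  case: (leqP s x) => // xs; exfalso; apply: n; exists s; by [].
move=> /(_ m.+1) [x [Sx mx]]; have := Sm _ Sx; lia.
Qed.

Section Facts.
Variables (A B C : set nat) (m : nat).
Hypotheses (A0 : A 0%N) (Am : is_max A m) (BC : sumset B C = A).

Lemma B0 : B 0%N /\ C 0%N.
Proof.
have : A 0%N by []. rewrite -BC => -[s [t [Bs [Ct e]]]].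
have s0 : s = 0%N by lia. have t0 : t = 0%N by lia.
by subst s t.
Qed.

Lemma BsubA x : B x -> A x.
Proof. move=> Bx; rewrite -BC; exists x, 0%N; split => //; split; [exact: (proj2 B0)|lia]. Qed.

Lemma CsubA x : C x -> A x.
Proof. move=> Cx; rewrite -BC; exists 0%N, x; split; [exact: (proj1 B0)|split => //]. Qed.

Lemma maxB : is_max B (smax B).
Proof.
have [x Hx] : exists x, is_max B x.
  apply: (@exists_max _ m (proj1 B0)) => s Bs; apply: (proj2 Am); exact: BsubA.
by rewrite (smaxE Hx).
Qed.

Lemma maxC : is_max C (smax C).
Proof.
have [x Hx] : exists x, is_max C x.
  apply: (@exists_max _ m (proj2 B0)) => s Cs; apply: (proj2 Am); exact: CsubA.
by rewrite (smaxE Hx).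
Qed.

Lemma sum_max : (smax B + smax C)%N = m.
Proof.
have HB := maxB; have HC := maxC.
have h1 : A (smax B + smax C)%N by rewrite -BC; exists (smax B), (smax C); case: HB; case: HC.
have := Am.2 _ h1.
have : A m by case: Am.
rewrite -BC => -[s [t [Bs [Ct ->]]]].
have := HB.2 _ Bs; have := HC.2 _ Ct; lia.
Qed.

Lemma BplusC x : B x -> A (x + smax C)%N.
Proof. move=> Bx; rewrite -BC; exists x, (smax C); split => //; split => //; exact: maxC.1. Qed.

Lemma recov k x : B x <-> (promote k A C B x /\ A x /\ A (x + smax C)%N).
Proof.
split.
  move=> Bx; split; first by left; left.
  by split; [exact: BsubA | exact: BplusC].
move=> [[[Bx|[[_ nA] _]]|[s [[_ nA] [cs e]]]] [Ax Axc]] //.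
exfalso; apply: nA; have -> : s = (x + smax C)%N by lia. done.
Qed.

Lemma max_promote k : (m <= k)%N -> (smax C <= smax B)%N ->
  smax (promote k A C B) = (k - smax C)%N.
Proof.
move=> mk cb; apply: smaxE.
have HB := maxB; have HC := maxC; have sm := sum_max.
split.
  case: (pselect (A k)) => Ak.
    have km : k = m by have := Am.2 _ Ak; lia.
    left; left; have -> : (k - smax C)%N = smax B by lia. exact: HB.1.
  right; exists k; split; [by split|split; lia].
move=> s [[Bs|[_ sc]]|[t [[tk _] [_ ->]]]].
- have := HB.2 _ Bs; lia.
- lia.
- lia.
Qed.

End Facts.

Theorem mainTheorem5 (k : nat) (A : set nat) :
  A 0%N ->
  (exists m, is_max A m /\ (m <= k)%N) ->
  forall B D : set nat, is_divisor A B -> is_divisor A D -> B <> D ->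
  Ffam k A B `&` Ffam k A D = set0.
Proof.
move=> A0 [m [Am mk]] B D _ _ BD.
rewrite -subset0 => X [[C [BC HB]] [E [DE HD]]]; apply: BD.
have sB := sum_max A0 Am BC; have sD := sum_max A0 Am DE.
have mixed : forall B C D E, sumset B C = A -> sumset D E = A ->
    (smax B <= smax C)%N -> (smax E <= smax D)%N -> B = promote k A E D -> B = D.
  move=> B' C' D' E' BC' DE' h1 h2 XB.
  have s1 := sum_max A0 Am BC'; have s2 := sum_max A0 Am DE'.
  have hm := max_promote A0 Am DE' mk h2; rewrite -XB in hm.
  have ce : smax C' = smax E' by lia.
  rewrite predeqE => x; rewrite (recov A0 Am DE' k x) -XB -ce.
  split; first by move=> Bx; split => //; split; [exact: (BsubA A0 BC' Bx)|exact: (BplusC A0 Am BC' Bx)].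
  by case.
case: HB => [[h1 XB]|[h1 XB]]; case: HD => [[h2 XD]|[h2 XD]]; subst X.
- by [].
- exact: (mixed B C D E).
- by symmetry; apply: (mixed D E B C) => //; rewrite -XD.
- have m1 := max_promote A0 Am BC mk h1; have m2 := max_promote A0 Am DE mk h2.
  rewrite XD in m1.
  have ce : smax C = smax E by lia.
  rewrite predeqE => x; rewrite (recov A0 Am BC k x) (recov A0 Am DE k x) XD ce; done.
Qed.
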